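(* Consider the following model. A principal P and an agent A interact over two periods $t\in\{1,2\}$. States $\omega_t\in\{0,1\}$ satisfy $\Pr[\omega_1=1]=\mu_0\in(0,1)$ and $\Pr[\omega_2=\omega\mid\omega_1=\omega]=\rho\in(1/2,1)$. In each period A chooses $e_t\in\{0,1\}$; if $e_t=1$ he observes $\omega_t$, if $e_t=0$ he observes $\omega_t$ with probability $\pi\in(0,1)$ and nothing otherwise. A reports $r_t\in\{\varnothing,\omega_t\}$ if he observed $\omega_t$, else $r_t=\varnothing$. P chooses $x=\hat x(r_1,r_2)\in\{0,1\}$ at the end of period 2. Payoffs: P gets $\mathbb{1}[x=\omega_2]-k(e_1+e_2)$, A gets $x-c(e_1+e_2)$, $c,k>0$. A mechanism consists of $\sigma_1\in\{0,1\}$, $\sigma_2:\{\varnothing,0,1\}\to\{0,1\}$, $\hat x:\{\varnothing,0,1\}^2\to\{0,1\}$, to which P commits; A best-responds, following the recommendation and disclosing when indifferent. A mechanism is IC if at every history occurring with positive probability A optimally obeys the testing recommendation and discloses every observed result, and $\hat x(r_1,\varnothing)=0$ whenever $\sigma_2(r_1)=1$. Let $\kappa=k/(1-\pi)$, $\gamma=c/(1-\pi)$, $\mu_2(\varnothing)=\rho\mu_0+(1-\rho)(1-\mu_0)$, $\bar\kappa=(1-\rho)/(1-\pi)$, $\bar\gamma=(1-\rho)[\mu_0-(1-\mu_0)(1-\pi)]/\pi$, and assume $\kappa\in(1-\rho,\min\{\mu_2(\varnothing),1-\mu_2(\varnothing)\}]$ and $\gamma\in(1-\rho,\mu_2(\varnothing)]$.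 Then a mechanism maximizing P's expected payoff among IC mechanisms has $\sigma_1=0$ and: (i) if $\kappa>\bar\kappa$ and $\gamma\ge\bar\gamma$: $\sigma_2(r_1)=\mathbb{1}[r_1=\varnothing]$ and $\hat x(r_1,r_2)=\mathbb{1}[r_1=1]+\mathbb{1}[r_1\neq1]\mathbb{1}[r_2=1]$; (ii) if $\kappa\in(1-\rho,\bar\kappa)$ or $\gamma<\bar\gamma$: $\sigma_2(0)=0$, $\sigma_2(1)=1$, $\sigma_2(\varnothing)=1$, and $\hat x(r_1,r_2)=\mathbb{1}[r_2=1]$; (iii) if $\kappa=\bar\kappa$, either of the two previous mechanisms is optimal.
   Context: P's expected payoff is the expected value of $\mathbb{1}[\hat x(r_1,r_2)=\omega_2]-k(e_1+e_2)$ under the behavior induced by the mechanism. Every mechanism's outcomes can be replicated by an IC mechanism, so optimality among IC mechanisms is optimality among all mechanisms. *)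

(* Defs.v *)
From HB Require Import structures.
From mathcomp Require Import all_boot all_order all_algebra.
Set Implicit Arguments. Unset Strict Implicit. Unset Printing Implicit Defensive.
Import Order.TTheory GRing.Theory Num.Theory.
Local Open Scope ring_scope.

(* Reports / observations: None = "nothing" (varnothing), Some w = state w. *)
Notation report := (option bool).

Record mech := Mech {
  sig1 : bool;
  sig2 : report -> bool;
  xhat : report -> report -> bool
}.

(* In period 1 he chooses e1, and, if he
   observed omega_1 = w, whether to disclose it (d1 w).  In period 2 his
   information is his period-1 observation o1 (which determines his report r1
   and the recommendation sigma_2(r1)); he chooses e2 o1 and, having observed
   omega_2 = w, whether to disclose it (d2 o1 w). *)
Record strat := Strat {
  se1 : bool;
  sd1 : bool -> bool;
  se2 : report -> bool;
  sd2 : report -> bool -> bool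
}.

Definition obedient (M : mech) : strat :=
  Strat (sig1 M) (fun _ => true) (sig2 M) (fun _ _ => true).

Section Model.
Variables (R : realFieldType) (mu0 rho pi c k : R).

Definition b2R (b : bool) : R := if b then 1 else 0.

Definition p_w1 (w1 : bool) : R := if w1 then mu0 else 1 - mu0.
Definition p_trans (w1 w2 : bool) : R := if w1 == w2 then rho else 1 - rho.
(* u = true : the agent observes the state without testing (prob. pi) *)
Definition p_luck (u : bool) : R := if u then pi else 1 - pi.

Definition observe (e w u : bool) : report := if e || u then Some w else None.
Definition disclose (d : bool -> bool) (o : report) : report :=
  if o is Some w then (if d w then Some w else None) else None.

Definition p_out (w1 w2 u1 u2 : bool) : R :=
  p_w1 w1 * p_trans w1 w2 * p_luck u1 * p_luck u2.

Definition o1_of (s : strat) w1 u1 := observe (se1 s) w1 u1.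
Definition e2_of (s : strat) w1 u1 := se2 s (o1_of s w1 u1).
Definition r1_of (s : strat) w1 u1 := disclose (sd1 s) (o1_of s w1 u1).
Definition r2_of (s : strat) w1 w2 u1 u2 :=
  disclose (sd2 s (o1_of s w1 u1)) (observe (e2_of s w1 u1) w2 u2).
Definition x_of (M : mech) (s : strat) w1 w2 u1 u2 : bool :=
  xhat M (r1_of s w1 u1) (r2_of s w1 w2 u1 u2).
Definition effort (s : strat) w1 u1 : R := b2R (se1 s) + b2R (e2_of s w1 u1).

Definition UA (M : mech) (s : strat) : R :=
  \sum_(w1 : bool) \sum_(w2 : bool) \sum_(u1 : bool) \sum_(u2 : bool)
    p_out w1 w2 u1 u2 * (b2R (x_of M s w1 w2 u1 u2) - c * effort s w1 u1).

Definition UP (M : mech) (s : strat) : R :=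
  \sum_(w1 : bool) \sum_(w2 : bool) \sum_(u1 : bool) \sum_(u2 : bool)
    p_out w1 w2 u1 u2 * (b2R (x_of M s w1 w2 u1 u2 == w2) - k * effort s w1 u1).

Definition payoffP (M : mech) : R := UP M (obedient M).

(* Obeying and always disclosing is optimal for A
   (ex ante against every strategy; for this finite game this is equivalent to
   optimality at every positive-probability history), and
   x-hat(r1, varnothing) = 0 whenever sigma_2(r1) = 1. *)
Definition IC (M : mech) : Prop :=
  (forall s : strat, UA M s <= UA M (obedient M)) /\
  (forall r1 : report, sig2 M r1 -> xhat M r1 None = false).

Definition optimal_IC (M : mech) : Prop :=
  IC M /\ forall M' : mech, IC M' -> payoffP M' <= payoffP M.

End Model.

Definition mech_i : mech :=
  Mech false (fun r1 => r1 == None)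
       (fun r1 r2 => (r1 == Some true) || ((r1 != Some true) && (r2 == Some true))).
Definition mech_ii : mech :=
  Mech false (fun r1 => r1 != Some false) (fun _ r2 => r2 == Some true).

(* Main.v *)
Require Import Defs.
From HB Require Import structures.
From mathcomp Require Import all_boot all_order all_algebra.
From mathcomp Require Import ring lra.
Set Implicit Arguments. Unset Strict Implicit. Unset Printing Implicit Defensive.
Import Order.TTheory GRing.Theory Num.Theory.
Local Open Scope ring_scope.

Section Aux.
Variables (R : realFieldType) (mu0 rho pi c k : R).

Definition qq (w : bool) : R := if w then rho else 1 - rho.

Definition aA (f : report -> bool) (e : bool) (d : bool -> bool) (q : R) : R :=
  if e then q * b2R R (f (if d true then Some true else None))
            + (1 - q) * b2R R (f (if d false then Some false else None)) - c
  else pi * (q * b2R R (f (if d true then Some true else None))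
            + (1 - q) * b2R R (f (if d false then Some false else None)))
       + (1 - pi) * b2R R (f None).

Definition vP (f : report -> bool) (e : bool) (q : R) : R :=
  if e then q * b2R R (f (Some true)) + (1 - q) * (1 - b2R R (f (Some false))) - k
  else pi * (q * b2R R (f (Some true)) + (1 - q) * (1 - b2R R (f (Some false))))
       + (1 - pi) * (q * b2R R (f None) + (1 - q) * (1 - b2R R (f None))).

Lemma b2R_eqT (b : bool) : b2R R (b == true) = b2R R b.
Proof. by case: b. Qed.
Lemma b2R_eqF (b : bool) : b2R R (b == false) = 1 - b2R R b.
Proof. by case: b => /=; rewrite /b2R; ring. Qed.

Lemma UA_dec (M : mech) (s : strat) :
  UA mu0 rho pi c M s =
  \sum_(w1 : bool) \sum_(u1 : bool) p_w1 mu0 w1 * p_luck pi u1 *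
     (aA (xhat M (r1_of s w1 u1)) (se2 s (o1_of s w1 u1)) (sd2 s (o1_of s w1 u1)) (qq w1)
      - c * b2R R (se1 s)).
Proof.
rewrite /UA !big_bool /aA /x_of /effort /r2_of /e2_of /r1_of /o1_of /p_out /observe /disclose /=.
case: (se1 s) => /=.
- case: (se2 s (Some true)); case: (se2 s (Some false)) => /=; rewrite /qq /p_trans /=; ring.
- case: (se2 s (Some true)); case: (se2 s (Some false)); case: (se2 s None) => /=; rewrite /qq /p_trans /=; ring.
Qed.

Lemma UP_dec (M : mech) :
  payoffP mu0 rho pi k M =
  \sum_(w1 : bool) \sum_(u1 : bool) p_w1 mu0 w1 * p_luck pi u1 *
     (vP (xhat M (observe (sig1 M) w1 u1)) (sig2 M (observe (sig1 M) w1 u1)) (qq w1)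
      - k * b2R R (sig1 M)).
Proof.
rewrite /payoffP /UP !big_bool /vP /x_of /effort /r2_of /e2_of /r1_of /o1_of /p_out /observe /disclose /obedient /=.
rewrite !b2R_eqT !b2R_eqF.
case: (sig1 M) => /=.
- case: (sig2 M (Some true)); case: (sig2 M (Some false)) => /=; rewrite /qq /p_trans /=; ring.
- case: (sig2 M (Some true)); case: (sig2 M (Some false)); case: (sig2 M None) => /=; rewrite /qq /p_trans /=; ring.
Qed.

Definition mu2 := rho * mu0 + (1 - rho) * (1 - mu0).

Lemma UP_closed (M : mech) :
  payoffP mu0 rho pi k M =
  if sig1 M then - k + mu0 * vP (xhat M (Some true)) (sig2 M (Some true)) rho
                 + (1 - mu0) * vP (xhat M (Some false)) (sig2 M (Some false)) (1 - rho)
  else pi * mu0 * vP (xhat M (Some true)) (sig2 M (Some true)) rho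
     + pi * (1 - mu0) * vP (xhat M (Some false)) (sig2 M (Some false)) (1 - rho)
     + (1 - pi) * vP (xhat M None) (sig2 M None) mu2.
Proof.
rewrite UP_dec !big_bool /= /qq /mu2 /observe /=.
case: (sig1 M) => /=; rewrite /vP.
- ring.
- case: (sig2 M None); ring.
Qed.

Definition AI M := aA (xhat M (Some true)) (sig2 M (Some true)) (fun _ => true) rho.
Definition A0 M := aA (xhat M (Some false)) (sig2 M (Some false)) (fun _ => true) (1 - rho).
Definition AN M := aA (xhat M None) (sig2 M None) (fun _ => true) mu2.

Lemma UA_ob (M : mech) :
  UA mu0 rho pi c M (obedient M) =
  if sig1 M then mu0 * AI M + (1 - mu0) * A0 M - c
  else pi * mu0 * AI M + pi * (1 - mu0) * A0 M + (1 - pi) * AN M.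
Proof.
rewrite UA_dec !big_bool /= /qq /AI /A0 /AN /mu2 /obedient /o1_of /r1_of /observe /disclose /=.
case: (sig1 M) => /=; rewrite /b2R.
- ring.
- rewrite /aA; case: (sig2 M None); ring.
Qed.

Definition sI (M : mech) (d : bool -> bool) : strat :=
  Strat (sig1 M) (fun _ => true)
    (fun o => if o is Some true then false else sig2 M o)
    (fun o w => if o is Some true then d w else true).

Lemma UA_sI (M : mech) d :
  UA mu0 rho pi c M (sI M d) =
  if sig1 M then mu0 * aA (xhat M (Some true)) false d rho + (1 - mu0) * A0 M - c
  else pi * mu0 * aA (xhat M (Some true)) false d rho + pi * (1 - mu0) * A0 M + (1 - pi) * AN M.
Proof.
rewrite UA_dec !big_bool /= /qq /AI /A0 /AN /mu2 /sI /o1_of /r1_of /observe /disclose /=.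
case: (sig1 M) => /=; rewrite /b2R.
- ring.
- rewrite /aA; case: (sig2 M None); ring.
Qed.

Definition sN (M : mech) (e : bool) (d : bool -> bool) : strat :=
  Strat false (fun _ => true)
    (fun o => if o is None then e else sig2 M o)
    (fun o w => if o is None then d w else true).

Lemma UA_sN (M : mech) e d : sig1 M = false ->
  UA mu0 rho pi c M (sN M e d) =
  pi * mu0 * AI M + pi * (1 - mu0) * A0 M + (1 - pi) * aA (xhat M None) e d mu2.
Proof.
move=> h1.
rewrite UA_dec !big_bool /= /qq /AI /A0 /AN /mu2 /sN /o1_of /r1_of /observe /disclose /=.
rewrite /b2R /aA; case: e; ring.
Qed.

Definition sD1 (M : mech) : strat :=
  Strat true (fun _ => true) (sig2 M) (fun _ _ => true).

Lemma UA_sD1 (M : mech) :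
  UA mu0 rho pi c M (sD1 M) = mu0 * AI M + (1 - mu0) * A0 M - c.
Proof.
rewrite UA_dec !big_bool /= /qq /AI /A0 /sD1 /o1_of /r1_of /observe /disclose /= /b2R.
ring.
Qed.

Definition sD3 (M : mech) : strat :=
  Strat false (fun w => w)
    (fun o => if o is Some false then false else sig2 M o)
    (fun _ _ => true).

Lemma UA_sD3 (M : mech) :
  UA mu0 rho pi c M (sD3 M) =
  pi * mu0 * AI M + pi * (1 - mu0) * aA (xhat M None) false (fun _ => true) (1 - rho)
  + (1 - pi) * AN M.
Proof.
rewrite UA_dec !big_bool /= /qq /AI /A0 /AN /mu2 /sD3 /o1_of /r1_of /observe /disclose /= /b2R.
rewrite /aA; case: (sig2 M None); ring.
Qed.

Lemma UA_gen_false (M : mech) (s : strat) : se1 s = false ->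
  UA mu0 rho pi c M s =
  pi * mu0 * aA (xhat M (disclose (sd1 s) (Some true))) (se2 s (Some true)) (sd2 s (Some true)) rho
  + pi * (1 - mu0) * aA (xhat M (disclose (sd1 s) (Some false))) (se2 s (Some false)) (sd2 s (Some false)) (1 - rho)
  + (1 - pi) * aA (xhat M None) (se2 s None) (sd2 s None) mu2.
Proof.
move=> h; rewrite UA_dec !big_bool /= /qq /mu2 /r1_of /o1_of h /observe /disclose /= /b2R.
rewrite /aA; case: (se2 s None); ring.
Qed.

Lemma UA_gen_true (M : mech) (s : strat) : se1 s = true ->
  UA mu0 rho pi c M s =
  mu0 * aA (xhat M (disclose (sd1 s) (Some true))) (se2 s (Some true)) (sd2 s (Some true)) rho
  + (1 - mu0) * aA (xhat M (disclose (sd1 s) (Some false))) (se2 s (Some false)) (sd2 s (Some false)) (1 - rho)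
  - c.
Proof.
move=> h; rewrite UA_dec !big_bool /= /qq /r1_of /o1_of h /observe /disclose /= /b2R.
ring.
Qed.
End Aux.


Lemma rowO (R : realFieldType) (rho pi k : R) (f : report -> bool) e :
  1 - rho < rho -> rho < 1 -> 0 < pi -> pi < 1 -> 0 < k -> (1 - rho) * (1 - pi) < k ->
  vP pi k f e (1 - rho) <= rho + pi * (1 - rho).
Proof.
move=> *; rewrite /vP /b2R.
case: e; case: (f None); case: (f (Some false)); case: (f (Some true)); nra.
Qed.

Lemma rowN (R : realFieldType) (m pi k : R) (f : report -> bool) e :
  0 <= m -> m <= 1 -> 0 < pi -> pi < 1 -> 0 < k ->
  k <= (1 - pi) * m -> k <= (1 - pi) * (1 - m) ->
  vP pi k f e m <= 1 - k.
Proof.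
move=> *; rewrite /vP /b2R.
case: e; case: (f None); case: (f (Some false)); case: (f (Some true)); nra.
Qed.

Lemma rowI (R : realFieldType) (rho pi c k : R) (f : report -> bool) (e : bool) :
  1 - rho < rho -> rho < 1 -> 0 < pi -> pi < 1 -> 0 < k -> k <= (1 - pi) * rho ->
  (e -> f None = false) ->
  aA pi c f false (fun w => w) rho <= aA pi c f e (fun _ => true) rho ->
  aA pi c f false (fun _ => false) rho <= aA pi c f e (fun _ => true) rho ->
  vP pi k f e rho <= 1 - k \/ (e = false /\ f None /\ f (Some false) /\ f (Some true)).
Proof.
move=> ? ? ? ? ? hkr.
rewrite /vP /aA /b2R.
case: e => /=; case E1: (f None); case E2: (f (Some false)); case E3: (f (Some true)) => //= H1 H2 H3;
  (try by right); left; nra.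
Qed.

Lemma coupling (R : realFieldType) (mu0 rho pi c k A0v : R) (f : report -> bool) (e : bool) :
  0 < mu0 -> mu0 < 1 -> 1 - rho < rho -> rho < 1 -> 0 < pi -> pi < 1 -> 0 < c -> 0 < k ->
  k <= (1 - pi) * mu2 mu0 rho -> k <= (1 - pi) * (1 - mu2 mu0 rho) ->
  c <= (1 - pi) * mu2 mu0 rho ->
  pi * c < (1 - pi) * (1 - rho) * (mu0 - (1 - mu0) * (1 - pi)) ->
  (e -> f None = false) ->
  aA pi c f false (fun w => w) (mu2 mu0 rho) <= aA pi c f e (fun _ => true) (mu2 mu0 rho) ->
  aA pi c f true (fun _ => true) (mu2 mu0 rho) <= aA pi c f e (fun _ => true) (mu2 mu0 rho) ->
  aA pi c f false (fun _ => true) (1 - rho) <= A0v ->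
  mu0 * 1 + (1 - mu0) * A0v - c <=
    pi * mu0 * 1 + pi * (1 - mu0) * A0v + (1 - pi) * aA pi c f e (fun _ => true) (mu2 mu0 rho) ->
  pi * mu0 * (k - (1 - rho)) <= (1 - pi) * (1 - k - vP pi k f e (mu2 mu0 rho)).
Proof.
move=> ? ? ? ? ? ? ? ? hk2 hk3 hc2 hg hfN H1 H2 H3 H4.
have hpm : 0 <= (1 - pi) * (1 - mu0) by nra.
have H3' := ler_wpM2l hpm H3.
have hD : pi * mu0 * (k - (1 - rho)) <= pi * k.
  rewrite -mulrA; apply: ler_wpM2l; [by apply: ltW | nra].
move: hk2 hk3 hc2 H1 H2 H3' H4 hfN; rewrite /mu2 /vP /aA /b2R.
case: e => /=; case E1: (f None); case E2: (f (Some false)); case E3: (f (Some true)) => //= *; nra.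
Qed.


Lemma pay_i (R : realFieldType) (mu0 rho pi k : R) :
  payoffP mu0 rho pi k mech_i =
  pi * mu0 * rho + pi * (1 - mu0) * (rho + pi * (1 - rho)) + (1 - pi) * (1 - k).
Proof.
rewrite UP_closed /= /vP /= /b2R /mu2. ring.
Qed.

Lemma pay_ii (R : realFieldType) (mu0 rho pi k : R) :
  payoffP mu0 rho pi k mech_ii =
  pi * mu0 * (1 - k) + pi * (1 - mu0) * (rho + pi * (1 - rho)) + (1 - pi) * (1 - k).
Proof.
rewrite UP_closed /= /vP /= /b2R /mu2. ring.
Qed.

Lemma aA_T (R : realFieldType) (pi c q B : R) (f : report -> bool) e d :
  f (Some true) = true -> f (Some false) = false -> f None = false ->
  0 <= q -> 0 <= pi -> q - c <= B -> pi * q <= B -> aA pi c f e d q <= B.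
Proof.
move=> h1 h0 hN hq hp H1 H2; rewrite /aA.
case: e; case: (d true); case: (d false); rewrite ?h1 ?h0 ?hN /b2R /=; nra.
Qed.

Lemma aA_1 (R : realFieldType) (pi c q : R) (f : report -> bool) e d :
  (forall r, f r = true) -> 0 < c -> 0 <= q -> q <= 1 -> 0 <= pi -> pi <= 1 ->
  aA pi c f e d q <= 1.
Proof.
move=> hf hc ? ? ? ?; rewrite /aA !hf /b2R /=; case: e; nra.
Qed.

Lemma IC_ii (R : realFieldType) (mu0 rho pi c k : R) :
  0 < mu0 -> mu0 < 1 -> 1 - rho < rho -> rho < 1 -> 0 < pi -> pi < 1 -> 0 < c ->
  (1 - rho) * (1 - pi) < c -> c <= (1 - pi) * mu2 mu0 rho ->
  IC mu0 rho pi c mech_ii.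
Proof.
move=> Hm0 Hm1 ? ? Hp0 Hp1 ? hc1 hc2.
have hm : 0 <= mu2 mu0 rho <= rho by rewrite /mu2; apply/andP; split; nra.
case/andP: hm => hm0 hm1.
split; last by case.
move=> s; rewrite UA_ob /= /AI /A0 /AN /=.
case E: (se1 s).
- rewrite UA_gen_true //.
  have h1 : aA pi c (xhat mech_ii (disclose (sd1 s) (Some true))) (se2 s (Some true)) (sd2 s (Some true)) rho <= rho - c.
    apply: aA_T => //; nra.
  have h0 : aA pi c (xhat mech_ii (disclose (sd1 s) (Some false))) (se2 s (Some false)) (sd2 s (Some false)) (1 - rho) <= pi * (1 - rho).
    apply: aA_T => //; nra.
  have m1 := ler_wpM2l (ltW Hm0) h1.
  have m0 : 0 <= 1 - mu0 by lra.
  have m0' := ler_wpM2l m0 h0.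
  have hx : 0 <= c * (1 - (1 - pi) * (1 - mu0)) by apply: mulr_ge0; nra.
  have hy : 0 <= (1 - pi) * ((1 - pi) * ((1 - mu0) * (1 - rho))).
    by apply: mulr_ge0; [lra|apply: mulr_ge0; [lra|apply: mulr_ge0; lra]].
  move: m1 m0' hx hy; rewrite /mu2; lra.
- rewrite UA_gen_false //.
  have h1 : aA pi c (xhat mech_ii (disclose (sd1 s) (Some true))) (se2 s (Some true)) (sd2 s (Some true)) rho <= rho - c.
    apply: aA_T => //; nra.
  have h0 : aA pi c (xhat mech_ii (disclose (sd1 s) (Some false))) (se2 s (Some false)) (sd2 s (Some false)) (1 - rho) <= pi * (1 - rho).
    apply: aA_T => //; nra.
  have hN : aA pi c (xhat mech_ii None) (se2 s None) (sd2 s None) (mu2 mu0 rho) <= mu2 mu0 rho - c.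
    apply: aA_T => //; nra.
  have p1 : 0 <= pi * mu0 by nra.
  have p2 : 0 <= pi * (1 - mu0) by nra.
  have p3 : 0 <= 1 - pi by lra.
  have m1 := ler_wpM2l p1 h1.
  have m0 := ler_wpM2l p2 h0.
  have mN := ler_wpM2l p3 hN.
  lra.
Qed.

Lemma IC_i (R : realFieldType) (mu0 rho pi c k : R) :
  0 < mu0 -> mu0 < 1 -> 1 - rho < rho -> rho < 1 -> 0 < pi -> pi < 1 -> 0 < c ->
  (1 - rho) * (1 - pi) < c -> c <= (1 - pi) * mu2 mu0 rho ->
  (1 - pi) * (1 - rho) * (mu0 - (1 - mu0) * (1 - pi)) <= pi * c ->
  IC mu0 rho pi c mech_i.
Proof.
move=> Hm0 Hm1 ? ? Hp0 Hp1 ? hc1 hc2 hg.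
have hm : 0 <= mu2 mu0 rho <= rho by rewrite /mu2; apply/andP; split; nra.
case/andP: hm => hm0 hm1.
split; last by case.
move=> s; rewrite UA_ob /= /AI /A0 /AN /=.
have h1 : aA pi c (xhat mech_i (disclose (sd1 s) (Some true))) (se2 s (Some true)) (sd2 s (Some true)) rho <= 1.
  rewrite /=; case: (sd1 s true).
  - apply: aA_1 => //; lra.
  - apply: aA_T => //; nra.
have h0 : aA pi c (xhat mech_i (disclose (sd1 s) (Some false))) (se2 s (Some false)) (sd2 s (Some false)) (1 - rho) <= pi * (1 - rho).
  rewrite /=; case: (sd1 s false); apply: aA_T => //; nra.
case E: (se1 s).
- rewrite UA_gen_true //.
  have m1 := ler_wpM2l (ltW Hm0) h1.
  have m0 : 0 <= 1 - mu0 by lra.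
  have m0' := ler_wpM2l m0 h0.
  have hx : 0 <= c * (1 - (1 - pi) * (1 - mu0)) by apply: mulr_ge0; nra.
  move: m1 m0' hx hg; rewrite /mu2; lra.
- rewrite UA_gen_false //.
  have hN : aA pi c (xhat mech_i None) (se2 s None) (sd2 s None) (mu2 mu0 rho) <= mu2 mu0 rho - c.
    apply: aA_T => //; nra.
  have p1 : 0 <= pi * mu0 by nra.
  have p2 : 0 <= pi * (1 - mu0) by nra.
  have p3 : 0 <= 1 - pi by lra.
  have m1 := ler_wpM2l p1 h1.
  have m0 := ler_wpM2l p2 h0.
  have mN := ler_wpM2l p3 hN.
  lra.
Qed.


Lemma cancel_l (R : realFieldType) (a x y r s : R) : 0 < a -> r = s -> a * x + r <= a * y + s -> x <= y.
Proof. move=> ha -> h; rewrite -(ler_pM2l ha); lra. Qed.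

Lemma rowI_IC (R : realFieldType) (mu0 rho pi c : R) (M : mech) d :
  0 < mu0 -> 0 < pi -> IC mu0 rho pi c M ->
  aA pi c (xhat M (Some true)) false d rho <= AI rho pi c M.
Proof.
move=> hm hp [Hic _]; have := Hic (sI M d); rewrite UA_sI UA_ob.
case: (sig1 M) => h.
- apply: (@cancel_l _ mu0 _ _ ((1 - mu0) * A0 rho pi c M - c) ((1 - mu0) * A0 rho pi c M - c)) => //; lra.
- have hpm : 0 < pi * mu0 by apply: mulr_gt0.
  apply: (@cancel_l _ (pi * mu0) _ _ (pi * (1 - mu0) * A0 rho pi c M + (1 - pi) * AN mu0 rho pi c M)
     (pi * (1 - mu0) * A0 rho pi c M + (1 - pi) * AN mu0 rho pi c M)) => //; lra.
Qed.

Lemma UB (R : realFieldType) (mu0 rho pi c k B : R) (M : mech) :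
  0 < mu0 -> mu0 < 1 -> 1 - rho < rho -> rho < 1 -> 0 < pi -> pi < 1 -> 0 < c -> 0 < k ->
  (1 - rho) * (1 - pi) < k ->
  k <= (1 - pi) * mu2 mu0 rho -> k <= (1 - pi) * (1 - mu2 mu0 rho) ->
  IC mu0 rho pi c M ->
  (sig1 M = false -> pi * mu0 * rho + pi * (1 - mu0) * (rho + pi * (1 - rho)) + (1 - pi) * (1 - k) <= B) ->
  pi * mu0 * (1 - k) + pi * (1 - mu0) * (rho + pi * (1 - rho)) + (1 - pi) * (1 - k) <= B ->
  payoffP mu0 rho pi k M <= B.
Proof.
move=> Hm0 Hm1 hr0 hr1 Hp0 Hp1 hc hk hk1 hk2 hk3 Hic HVi HVii.
have hm : 0 <= mu2 mu0 rho <= 1 by rewrite /mu2; apply/andP; split; nra.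
case/andP: hm => hm0 hm1.
have hkr : k <= (1 - pi) * rho by apply: (le_trans hk3); rewrite /mu2; nra.
have I1 := rowI_IC (fun w => w) Hm0 Hp0 Hic.
have I2 := rowI_IC (fun _ => false) Hm0 Hp0 Hic.
have hx := Hic.2 (Some true).
have VI := @rowI _ rho pi c k (xhat M (Some true)) (sig2 M (Some true)) hr0 hr1 Hp0 Hp1 hk hkr hx I1 I2.
have VO := @rowO _ rho pi k (xhat M (Some false)) (sig2 M (Some false)) hr0 hr1 Hp0 Hp1 hk hk1.
have VN := @rowN _ (mu2 mu0 rho) pi k (xhat M None) (sig2 M None) hm0 hm1 Hp0 Hp1 hk hk2 hk3.
have VI' : vP pi k (xhat M (Some true)) (sig2 M (Some true)) rho <= 1 - k \/
           vP pi k (xhat M (Some true)) (sig2 M (Some true)) rho <= rho.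
  case: VI => [->|[-> [h1 [h2 h3]]]]; [by left | right].
  by rewrite /vP h1 h2 h3 /b2R /=; lra.
rewrite UP_closed.
have m0 : 0 <= 1 - mu0 by lra.
have p1 : 0 <= pi * mu0 by nra.
have p2 : 0 <= pi * (1 - mu0) by nra.
have p3 : 0 <= 1 - pi by lra.
case E1: (sig1 M).
- have mO := ler_wpM2l m0 VO.
  case: VI' => VI'.
  + have mI := ler_wpM2l (ltW Hm0) VI'.
    have f1 : 0 <= k * (1 - (1 - pi) * (1 - mu0)) by apply: mulr_ge0; nra.
    have f2 : 0 <= (1 - pi) * (1 - mu0) * ((1 - rho) * (1 - pi)) by apply: mulr_ge0; nra.
    lra.
  + have mI := ler_wpM2l (ltW Hm0) VI'.
    have f1 : 0 <= k * (pi * (1 - mu0)) by apply: mulr_ge0; nra.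
    have f2 : 0 <= mu0 * (1 - rho) by nra.
    have f3 : 0 <= (1 - mu0) * (1 - pi) * ((1 - pi) * (1 - rho)) by apply: mulr_ge0; nra.
    lra.
- have mO := ler_wpM2l p2 VO.
  have mN := ler_wpM2l p3 VN.
  have HVi' := HVi E1.
  case: VI' => VI'; have mI := ler_wpM2l p1 VI'; lra.
Qed.


Lemma cancel_r (R : realFieldType) (a x y r s : R) : 0 < a -> r = s -> r + a * x <= s + a * y -> x <= y.
Proof. move=> ha -> h; rewrite -(ler_pM2l ha); lra. Qed.

Lemma UB2 (R : realFieldType) (mu0 rho pi c k : R) (M : mech) :
  0 < mu0 -> mu0 < 1 -> 1 - rho < rho -> rho < 1 -> 0 < pi -> pi < 1 -> 0 < c -> 0 < k ->
  (1 - rho) * (1 - pi) < k ->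
  k <= (1 - pi) * mu2 mu0 rho -> k <= (1 - pi) * (1 - mu2 mu0 rho) ->
  c <= (1 - pi) * mu2 mu0 rho ->
  pi * c < (1 - pi) * (1 - rho) * (mu0 - (1 - mu0) * (1 - pi)) ->
  IC mu0 rho pi c M ->
  payoffP mu0 rho pi k M <=
  pi * mu0 * (1 - k) + pi * (1 - mu0) * (rho + pi * (1 - rho)) + (1 - pi) * (1 - k).
Proof.
move=> Hm0 Hm1 hr0 hr1 Hp0 Hp1 hc hk hk1 hk2 hk3 hc2 hg Hic.
have hm : 0 <= mu2 mu0 rho <= 1 by rewrite /mu2; apply/andP; split; nra.
case/andP: hm => hm0 hm1.
case E1: (sig1 M).
  apply: (@UB _ mu0 rho pi c k) => // h; by rewrite h in E1.
have hkr : k <= (1 - pi) * rho by apply: (le_trans hk3); rewrite /mu2; nra.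
have I1 := rowI_IC (fun w => w) Hm0 Hp0 Hic.
have I2 := rowI_IC (fun _ => false) Hm0 Hp0 Hic.
have hx := Hic.2 (Some true).
have VI := @rowI _ rho pi c k (xhat M (Some true)) (sig2 M (Some true)) hr0 hr1 Hp0 Hp1 hk hkr hx I1 I2.
have VO := @rowO _ rho pi k (xhat M (Some false)) (sig2 M (Some false)) hr0 hr1 Hp0 Hp1 hk hk1.
have VN := @rowN _ (mu2 mu0 rho) pi k (xhat M None) (sig2 M None) hm0 hm1 Hp0 Hp1 hk hk2 hk3.
rewrite UP_closed E1.
have m0 : 0 <= 1 - mu0 by lra.
have p1 : 0 <= pi * mu0 by nra.
have p2 : 0 <= pi * (1 - mu0) by nra.
have p3 : 0 <= 1 - pi by lra.
have mO := ler_wpM2l p2 VO.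
case: VI => [VI|[e1 [h1 [h2 h3]]]].
  have mN := ler_wpM2l p3 VN; have mI := ler_wpM2l p1 VI; lra.
have vI : vP pi k (xhat M (Some true)) (sig2 M (Some true)) rho = rho.
  by rewrite /vP e1 h1 h2 h3 /b2R /=; ring.
have aI : AI rho pi c M = 1.
  by rewrite /AI /aA e1 /= h1 h2 h3 /b2R /=; ring.
have [Hu _] := Hic.
have N1 : aA pi c (xhat M None) false (fun w => w) (mu2 mu0 rho) <= AN mu0 rho pi c M.
  have := Hu (sN M false (fun w => w)); rewrite UA_sN // UA_ob E1.
  apply: cancel_r => //; lra.
have N2 : aA pi c (xhat M None) true (fun _ => true) (mu2 mu0 rho) <= AN mu0 rho pi c M.
  have := Hu (sN M true (fun _ => true)); rewrite UA_sN // UA_ob E1.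
  apply: cancel_r => //; lra.
have H3 : aA pi c (xhat M None) false (fun _ => true) (1 - rho) <= A0 rho pi c M.
  have := Hu (sD3 M); rewrite UA_sD3 UA_ob E1 => h.
  have hpm : 0 < pi * (1 - mu0) by apply: mulr_gt0; lra.
  rewrite -(ler_pM2l hpm); lra.
have H4 := Hu (sD1 M); rewrite UA_sD1 UA_ob E1 aI in H4.
have C := @coupling _ mu0 rho pi c k (A0 rho pi c M) (xhat M None) (sig2 M None)
  Hm0 Hm1 hr0 hr1 Hp0 Hp1 hc hk hk2 hk3 hc2 hg (Hic.2 None) N1 N2 H3 H4.
rewrite vI; lra.
Qed.


Unset Implicit Arguments.

Theorem proposition4 (R : realFieldType) (mu0 rho pi c k : R) :
  0 < mu0 < 1 -> 2^-1 < rho < 1 -> 0 < pi < 1 -> 0 < c -> 0 < k ->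
  let kappa := k / (1 - pi) in
  let gamma := c / (1 - pi) in
  let mu2 := rho * mu0 + (1 - rho) * (1 - mu0) in
  let kbar := (1 - rho) / (1 - pi) in
  let gbar := (1 - rho) * (mu0 - (1 - mu0) * (1 - pi)) / pi in
  1 - rho < kappa -> kappa <= Num.min mu2 (1 - mu2) ->
  1 - rho < gamma -> gamma <= mu2 ->
  (* (i) *)
  (kbar < kappa -> gbar <= gamma -> optimal_IC mu0 rho pi c k mech_i) /\
  (* (ii) *)
  ((kappa < kbar \/ gamma < gbar) -> optimal_IC mu0 rho pi c k mech_ii) /\
  (* (iii) *)
  (kappa = kbar -> gbar <= gamma ->
     optimal_IC mu0 rho pi c k mech_i /\ optimal_IC mu0 rho pi c k mech_ii).
Proof.
case/andP=> Hm0 Hm1; case/andP=> Hr0 Hr1; case/andP=> Hp0 Hp1 Hc Hk.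
move=> kappa gamma mu2' kbar gbar Hk1 Hk2 Hg1 Hg2.
have hq : 0 < 1 - pi by lra.
have hq' : 1 - pi != 0 by rewrite lt0r_neq0.
have hr0 : 1 - rho < rho.
  have h2 : (2 : R)^-1 * 2 = 1 by rewrite mulVf // pnatr_eq0.
  lra.
have hm2 : mu2' = mu2 mu0 rho by [].
have hk1 : (1 - rho) * (1 - pi) < k by move: Hk1; rewrite /kappa ltr_pdivlMr.
have [hk2 hk3] : k <= mu2 mu0 rho * (1 - pi) /\ k <= (1 - mu2 mu0 rho) * (1 - pi).
  by move: Hk2; rewrite le_min => /andP []; rewrite /kappa !ler_pdivrMr // hm2.
have hc1 : (1 - rho) * (1 - pi) < c by move: Hg1; rewrite /gamma ltr_pdivlMr.
have hc2 : c <= mu2 mu0 rho * (1 - pi) by move: Hg2; rewrite /gamma ler_pdivrMr // hm2.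
have hk2' : k <= (1 - pi) * mu2 mu0 rho by lra.
have hk3' : k <= (1 - pi) * (1 - mu2 mu0 rho) by lra.
have hc2' : c <= (1 - pi) * mu2 mu0 rho by lra.
have Gle : gbar <= gamma -> (1 - pi) * (1 - rho) * (mu0 - (1 - mu0) * (1 - pi)) <= pi * c.
  rewrite /gbar /gamma ler_pdivrMr // mulrAC ler_pdivlMr //; lra.
have Glt : gamma < gbar -> pi * c < (1 - pi) * (1 - rho) * (mu0 - (1 - mu0) * (1 - pi)).
  rewrite /gbar /gamma ltr_pdivlMr // mulrAC ltr_pdivrMr //; lra.
have p1 : 0 <= pi * mu0 by apply: mulr_ge0; lra.
have ICi : gbar <= gamma -> IC mu0 rho pi c mech_i.
  move=> /Gle hg; exact: (@IC_i _ mu0 rho pi c k).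
have ICii : IC mu0 rho pi c mech_ii by exact: (@IC_ii _ mu0 rho pi c k).
have OPTi : 1 - rho <= k -> gbar <= gamma -> optimal_IC mu0 rho pi c k mech_i.
  move=> hkr hg; split; first exact: ICi.
  move=> M' HM'; rewrite pay_i; apply: (@UB _ mu0 rho pi c k) => //; try move=> _;
  (have : pi * mu0 * (1 - k) <= pi * mu0 * rho by apply: ler_wpM2l => //; lra); lra.
have OPTii1 : k <= 1 - rho -> optimal_IC mu0 rho pi c k mech_ii.
  move=> hkr; split; first exact: ICii.
  move=> M' HM'; rewrite pay_ii; apply: (@UB _ mu0 rho pi c k) => //; try move=> _;
  (have : pi * mu0 * rho <= pi * mu0 * (1 - k) by apply: ler_wpM2l => //; lra); lra.
split; [|split].
- move=> H hg; apply: OPTi hg.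
  move: H; rewrite /kbar /kappa ltr_pdivlMr // divfK //; lra.
- case=> H.
  + apply: OPTii1; move: H; rewrite /kbar /kappa ltr_pdivrMr // divfK //; lra.
  + split; first exact: ICii.
    move=> M' HM'; rewrite pay_ii; apply: (@UB2 _ mu0 rho pi c k) => //.
    exact: Glt.
- move=> H hg.
  have hk : k = 1 - rho.
    have := congr1 (fun x => x * (1 - pi)) H; rewrite /= !divfK //.
  split; [apply: OPTi hg | apply: OPTii1]; lra.
Qed.
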